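(* Let $(\lambda,\mu,\mu')$ be an admissible triplet of type 1, and let $\mu^\diamond,\mu'^\diamond$ be the associated weights. Then $\lambda+\mu'^\diamond\in P_+$; equivalently, the triplet $(\lambda,\mu'^\diamond,\mu^\diamond)$ is admissible.
   Context: Type $D_n$ weights are $(\lambda_1,\dots,\lambda_n)$; $\langle\lambda,\alpha_j^\vee\rangle=\lambda_j-\lambda_{j+1}$ ($j<n$), $\langle\lambda,\alpha_n^\vee\rangle=\lambda_{n-1}+\lambda_n$; $P_+=\{\lambda_j\in\frac12\mathbb Z,\lambda_j-\lambda_k\in\mathbb Z,\lambda_1\ge\dots\ge\lambda_n,\lambda_{n-1}+\lambda_n\ge0\}$; $P[S]=\{(\pm\frac12,\dots,\pm\frac12)\}$. $\Delta^k$ is the set of sums $\mu_1+\dots+\mu_k$ over $(\mu_1,\dots,\mu_k)\in P[S]^k$ with all partial sums in $P_+$ ($\Delta^0=\{0\}$). A triplet $(\lambda,\mu,\mu')$ is admissible if $\lambda\in\Delta^k$ for some $k\ge0$, $\mu,\mu'\in P[S]$, $\lambda+\mu,\lambda+\mu+\mu'\in P_+$. A free interval is a subset $\mathrm{Fr}\subset\{1,\dots,n\}$, maximal by inclusion, with $\lambda$ constant on $\mathrm{Fr}$ and $\mu_j\mu'_j<0$ for $j\in\mathrm{Fr}$. Weights $\mu^*,\mu'^*$: equal to $\mu,\mu'$ outside free intervals; on each free interval, with $b=|\{j\in\mathrm{Fr}:\mu'_j=+\frac12\}|$, $\mu'^*_j=+\frac12$ on the $b$ smallest elements of $\mathrm{Fr}$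 and $-\frac12$ on the rest, $\mu^*_j=-\mu'^*_j$. The triplet is of type 1 if $\lambda_{n-1}+\lambda_n+\mu'^*_{n-1}+\mu'^*_n<0$ and $n-1$, $n$ lie in two different free intervals. In that case let $a$ be the number of elements $j$ of the free interval containing $n-1$ with $\mu'_j=-\frac12$; then $\mu'^\diamond$ is obtained from $\mu'^*$ by setting the coordinates $n$ and $n-a$ equal to $+\frac12$, and $\mu^\diamond$ from $\mu^*$ by setting the coordinates $n$ and $n-a$ equal to $-\frac12$ (in $\mu'^*$ these coordinates are $-\frac12$ and in $\mu^*$ they are $+\frac12$, so $\mu^\diamond+\mu'^\diamond=\mu+\mu'$). *)

(* Defs.v *)
From mathcomp Require Import all_boot all_order all_algebra.
Set Implicit Arguments. Unset Strict Implicit. Unset Printing Implicit Defensive.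
Import Order.TTheory GRing.Theory Num.Theory.
Local Open Scope ring_scope.

(* Type D_n weights: lambda = (lambda_1,...,lambda_n) in Q^n.
   CONVENTION: the coordinate lambda_j (1-based, as in the paper) is
   stored at the ordinal index j-1 : 'I_n (0-based). *)
Definition weight (n : nat) := {ffun 'I_n -> rat}.

Definition half : rat := 2%:R^-1.

(* value of a weight at a 0-based nat index (0 outside the range) *)
Definition cw n (l : weight n) (i : nat) : rat :=
  if insub i is Some j then l j else 0.

Definition dominant n (l : weight n) : Prop :=
  [/\ forall i, (2%:R * l i) \is a Num.int,
      forall i j, (l i - l j) \is a Num.int,
      forall i j : 'I_n, (i <= j)%N -> l j <= l i
    & 0 <= cw l (n - 2) + cw l (n - 1)].

Definition inPS n (m : weight n) : Prop := forall i, m i = half \/ m i = - half.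

Definition inDelta n (k : nat) (l : weight n) : Prop :=
  exists ms : seq (weight n),
    [/\ size ms = k, forall m, m \in ms -> inPS m,
        forall i, (i <= k)%N -> dominant (\sum_(m <- take i ms) m)
      & l = \sum_(m <- ms) m].

Definition admissible n (l m m' : weight n) : Prop :=
  [/\ exists k, inDelta k l, inPS m, inPS m', dominant (l + m)
    & dominant (l + m + m')].

Definition freeCond n (l m m' : weight n) (F : {set 'I_n}) : bool :=
  [forall i in F, forall j in F, l i == l j] && [forall i in F, m i * m' i < 0].

Definition isFree n (l m m' : weight n) (F : {set 'I_n}) : bool :=
  freeCond l m m' F &&
  [forall G : {set 'I_n}, (freeCond l m m' G && (F \subset G)) ==> (G == F)].

Definition mustar' n (l m m' : weight n) : weight n :=
  [ffun j => match [pick F | isFree l m m' F && (j \in F)] with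
             | Some F =>
                 if (#|[set i in F | (i < j)%N]| <
                     #|[set i in F | m' i == half]|)%N then half else - half
             | None => m' j
             end].

Definition mustar n (l m m' : weight n) : weight n :=
  [ffun j => if [pick F | isFree l m m' F && (j \in F)] is Some _
             then - mustar' l m m' j else m j].

Definition type1 n (l m m' : weight n) : Prop :=
  cw l (n - 2) + cw l (n - 1) + cw (mustar' l m m') (n - 2)
    + cw (mustar' l m m') (n - 1) < 0 /\
  exists (F G : {set 'I_n}) (i1 i2 : 'I_n),
    [/\ val i1 = (n - 2)%N, val i2 = (n - 1)%N, isFree l m m' F & isFree l m m' G] /\
    [/\ i1 \in F, i2 \in G & F != G].

Definition a_num n (l m m' : weight n) : nat :=
  match [pick F | isFree l m m' F && [exists i in F, val i == (n - 2)%N]] with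
  | Some F => #|[set j in F | m' j == - half]|
  | None => 0
  end.

(* mu'^diamond : coordinates n and n-a (1-based) set to +1/2,
   i.e. 0-based indices n-1 and n-a-1 *)
Definition mudiam' n (l m m' : weight n) : weight n :=
  [ffun j => if (val j == (n - 1)%N) || (val j == (n - a_num l m m' - 1)%N)
             then half else mustar' l m m' j].

Definition mudiam n (l m m' : weight n) : weight n :=
  [ffun j => if (val j == (n - 1)%N) || (val j == (n - a_num l m m' - 1)%N)
             then - half else mustar l m m' j].

(* Main.v *)
Require Import Defs.
From mathcomp Require Import all_boot all_order all_algebra.
From mathcomp Require Import ring lra zify.
Import Order.TTheory GRing.Theory Num.Theory.
Set Implicit Arguments. Unset Strict Implicit. Unset Printing Implicit Defensive.
Local Open Scope ring_scope.
Lemma cnt_iota t u n : count (fun k => (t <= k < u)%N) (iota 0 n) = (minn u n - t)%N.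
Proof.
elim: n => [|n IH]; first by rewrite /=; lia.
rewrite -addn1 iotaD count_cat /= addn0 add0n IH.
case: (leqP t n) => /=; case: (ltnP n u) => /=; lia.
Qed.
Lemma c1 n t u : (u <= n)%N -> #|[set k : 'I_n | (t <= k < u)%N]| = (u - t)%N.
Proof.
move=> hu. rewrite cardsE cardE /enum_mem size_filter.
have -> : (u - t = minn u n - t)%N by lia.
rewrite -cnt_iota -val_enum_ord count_map. by rewrite enumT.
Qed.


Lemma half_eq : Defs.half + Defs.half = 1.
Proof. rewrite /Defs.half; lra. Qed.



Lemma dom_shift n (l x : weight n) : dominant l -> inPS x ->
  (forall i j : 'I_n, (i <= j)%N -> l i = l j -> x j <= x i) ->
  0 <= cw (l + x) (n - 2) + cw (l + x) (n - 1) ->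
  dominant (l + x).
Proof.
case=> h1 h2 h3 _ hx hmon hlast; split => //.
- move=> i; rewrite ffunE mulrDr; apply: rpredD => //.
  case: (hx i) => ->; rewrite /Defs.half ?mulrN mulfV //; by rewrite ?rpredN.
- move=> i j; rewrite !ffunE.
  have -> : l i + x i - (l j + x j) = (l i - l j) + (x i - x j) by ring.
  apply: rpredD => //.
  case: (hx i) => ->; case: (hx j) => ->; rewrite ?subrr ?opprK ?half_eq //;
   rewrite ?rpredN //.
- move=> i j hij; rewrite !ffunE.
  have hl := h3 _ _ hij.
  have [e|ne] := eqVneq (l i) (l j).
    by rewrite e lerD2l; apply: hmon.
  have d1 : 1 <= `|l i - l j| by apply: norm_intr_ge1 => //; rewrite subr_eq0.
  have d2 : `|l i - l j| = l i - l j by rewrite ger0_norm // subr_ge0.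
  rewrite d2 in d1.
  case: (hx i) => ->; case: (hx j) => ->; rewrite /Defs.half; lra.
Qed.

Lemma hpos : 0 < Defs.half. Proof. by rewrite /Defs.half invr_gt0. Qed.
Lemma prod_neg (x y : rat) : x = Defs.half \/ x = - Defs.half ->
  y = Defs.half \/ y = - Defs.half -> (x * y < 0) = (x == - y).
Proof.
have hp := hpos; have hh : 0 < Defs.half * Defs.half by apply: mulr_gt0.
have ne : (Defs.half == - Defs.half) = false.
  by apply/negbTE; rewrite -addr_eq0 gt_eqF // addr_gt0.
case=>->[]->; rewrite ?mulrN ?mulNr ?opprK ?oppr_lt0 ?eqxx ?ne.
- by rewrite ltNge ltW.
- by rewrite hh.
- by rewrite hh.
- by rewrite ltNge ltW // eq_sym ne.
Qed.

Definition Sof n (l m m' : weight n) (j : 'I_n) : {set 'I_n} :=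
  [set k | (l k == l j) && (m k * m' k < 0)].

Lemma isFree_Sof n (l m m' : weight n) F j :
  isFree l m m' F -> j \in F -> F = Sof l m m' j.
Proof.
case/andP => /andP[/forall_inP hc /forall_inP hf] /forallP hmax hj.
have sub : F \subset Sof l m m' j.
  apply/subsetP => k hk; rewrite inE hf // andbT.
  by move/forall_inP: (hc k hk) => /(_ j hj).
have fc : freeCond l m m' (Sof l m m' j).
  apply/andP; split; apply/forall_inP => a; rewrite inE => /andP[/eqP ea ha] //.
  apply/forall_inP => b; rewrite inE => /andP[/eqP eb _]. by rewrite ea eb.
by move: (hmax (Sof l m m' j)); rewrite fc sub /= => /eqP.
Qed.

Lemma Sof_isFree n (l m m' : weight n) j :
  m j * m' j < 0 -> isFree l m m' (Sof l m m' j).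
Proof.
move=> hj; apply/andP; split.
  apply/andP; split; apply/forall_inP => a; rewrite inE => /andP[/eqP ea ha] //.
  apply/forall_inP => b; rewrite inE => /andP[/eqP eb _]. by rewrite ea eb.
apply/forallP => G; apply/implyP => /andP[/andP[/forall_inP hc /forall_inP hf] sub].
have jG : j \in G by apply: (subsetP sub); rewrite inE eqxx hj.
rewrite eqEsubset sub andbT; apply/subsetP => k hk.
rewrite inE hf // andbT. by move/forall_inP: (hc k hk) => /(_ j jG).
Qed.

Lemma pick_free n (l m m' : weight n) j :
  [pick F | isFree l m m' F && (j \in F)] =
  if m j * m' j < 0 then Some (Sof l m m' j) else None.
Proof.
case: pickP => [F /andP[hF hj] | h].
  have e := isFree_Sof hF hj.
  have : j \in Sof l m m' j by rewrite -e.
  by rewrite inE => /andP[_ ->]; rewrite e.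
case: ifP => // hj.
by move: (h (Sof l m m' j)); rewrite Sof_isFree // inE eqxx hj.
Qed.

Lemma mustar'E n (l m m' : weight n) j :
  mustar' l m m' j =
  if m j * m' j < 0 then
    (if (#|[set i in Sof l m m' j | (i < j)%N]| <
         #|[set i in Sof l m m' j | m' i == Defs.half]|)%N then Defs.half else - Defs.half)
  else m' j.
Proof. by rewrite ffunE pick_free; case: ifP. Qed.

Lemma mustarE n (l m m' : weight n) j :
  mustar l m m' j = if m j * m' j < 0 then - mustar' l m m' j else m j.
Proof. by rewrite /mustar ffunE pick_free; case: ifP. Qed.

Lemma free_eq (x y : rat) : x = Defs.half \/ x = - Defs.half ->
  y = Defs.half \/ y = - Defs.half -> x * y < 0 -> x = - y.
Proof. by move=> hx hy; rewrite prod_neg // => /eqP. Qed.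

Lemma nfree_eq (x y : rat) : x = Defs.half \/ x = - Defs.half ->
  y = Defs.half \/ y = - Defs.half -> ~~ (x * y < 0) -> x = y.
Proof.
have hp := hpos.
move=> hx hy; rewrite prod_neg // => h.
case: hx h => ->; case: hy => ->; rewrite ?opprK ?eqxx //.
Qed.

Lemma mudiam'E n (l m m' : weight n) j :
  mudiam' l m m' j = if (val j == (n - 1)%N) || (val j == (n - a_num l m m' - 1)%N)
                     then Defs.half else mustar' l m m' j.
Proof. by rewrite /mudiam' ffunE. Qed.

Lemma mudiamE n (l m m' : weight n) j :
  mudiam l m m' j = if (val j == (n - 1)%N) || (val j == (n - a_num l m m' - 1)%N)
                     then - Defs.half else mustar l m m' j.
Proof. by rewrite /mudiam ffunE. Qed.


Lemma ar1 (x N : nat) : (x != N - 1)%N -> (x < N)%N -> (x < N - 1)%N.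
Proof. lia. Qed.

Lemma ar2 (x y N : nat) : (2 <= N)%N -> y = (N - 2)%N -> (x < N - 1)%N -> (x <= y)%N.
Proof. lia. Qed.

Lemma ar3 (i t a N : nat) : (t <= i)%N -> (i < N - a - 1)%N -> (i - t < N - 1 - t - a)%N.
Proof. lia. Qed.

Lemma ar4 (x a t N : nat) : x = (N - a - 1)%N -> (0 < a)%N -> (a <= N - 1 - t)%N ->
  (t <= x < N - 1)%N.
Proof. move=> *; apply/andP; split; lia. Qed.

Lemma ar5 (x t i N : nat) : (i < N - 1)%N -> ((t <= x < N - 1) && (x < i))%N = (t <= x < i)%N.
Proof.
move=> h; apply/idP/idP.
  by case/andP => /andP[h1 h2] h3; rewrite h1 h3.
case/andP => h1 h3; rewrite h1 h3 /= andbT; lia.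
Qed.

Lemma ar6 (x y : nat) : (x <= y)%N -> x != y -> (x < y)%N.
Proof. lia. Qed.

Lemma hne1 : (Defs.half == - Defs.half) = false.
Proof. by apply/negbTE; rewrite -addr_eq0 gt_eqF // addr_gt0 // hpos. Qed.
Lemma hne2 : (- Defs.half == Defs.half) = false.
Proof. by rewrite eq_sym hne1. Qed.

Lemma ar7 (i a N : nat) : (i < N - a - 1)%N -> (i < N - 1)%N.
Proof. lia. Qed.

Lemma ar8 (x a N : nat) : x = (N - a - 1)%N -> x != (N - 1)%N -> (0 < a)%N.
Proof. lia. Qed.

Lemma Bl_gen (mi m'i mj m'j : rat) :
  mi = Defs.half \/ mi = - Defs.half -> m'i = Defs.half \/ m'i = - Defs.half ->
  mj = Defs.half \/ mj = - Defs.half -> m'j = Defs.half \/ m'j = - Defs.half ->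
  mj <= mi -> (mi = mj -> m'j <= m'i) -> m'j - m'i <= 2%:R * (mi - mj).
Proof.
have hp := hpos.
case=> ->; case=> ->; case=> ->; case=> -> A B; rewrite /Defs.half in A B hp *;
 try (have := B erefl); lra.
Qed.

Lemma ms_case2 (mi m'i mj m'j y : rat) :
  mi = Defs.half \/ mi = - Defs.half -> m'i = Defs.half \/ m'i = - Defs.half ->
  mj = Defs.half \/ mj = - Defs.half -> m'j = Defs.half \/ m'j = - Defs.half ->
  y = Defs.half \/ y = - Defs.half ->
  mi = - m'i -> mj = m'j -> mj <= mi -> m'j - m'i <= 2%:R * (mi - mj) -> m'j <= y.
Proof.
have hp := hpos.
case=> ->; case=> ->; case=> ->; case=> ->; case=> ->; rewrite /Defs.half in hp *; lra.
Qed.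

Lemma ms_case3 (mi m'i mj m'j y : rat) :
  mi = Defs.half \/ mi = - Defs.half -> m'i = Defs.half \/ m'i = - Defs.half ->
  mj = Defs.half \/ mj = - Defs.half -> m'j = Defs.half \/ m'j = - Defs.half ->
  y = Defs.half \/ y = - Defs.half ->
  mi = m'i -> mj = - m'j -> mj <= mi -> m'j - m'i <= 2%:R * (mi - mj) -> y <= m'i.
Proof.
have hp := hpos.
case=> ->; case=> ->; case=> ->; case=> ->; case=> ->; rewrite /Defs.half in hp *; lra.
Qed.

Theorem proposition6p5 (n : nat) (l m m' : weight n) :
  (2 <= n)%N ->
  admissible l m m' ->
  type1 l m m' ->
  dominant (l + mudiam' l m m') /\
  admissible l (mudiam' l m m') (mudiam l m m').
Proof.
move=> hn [[k hk] hPm hPm' hlm hlmm'] [_ [F [G [i1 [i2 [[v1 v2 hF hG] [hi1 hi2 hFG]]]]]]].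
have hl : dominant l.
  by case: hk => ms [hs _ hd e]; rewrite e; move: (hd k (leqnn k)); rewrite -hs take_size.
have [hl1 hl2 hl3 hl4] := hl.
have mon_lm : forall i j : 'I_n, (i <= j)%N -> l j + m j <= l i + m i.
  by move=> i j hij; case: hlm => _ _ h _; move: (h i j hij); rewrite !ffunE.
have mon_lmm : forall i j : 'I_n, (i <= j)%N -> l j + m j + m' j <= l i + m i + m' i.
  by move=> i j hij; case: hlmm' => _ _ h _; move: (h i j hij); rewrite !ffunE.
have hp := hpos.
have mon_m : forall i j : 'I_n, (i <= j)%N -> l i = l j -> m j <= m i.
  by move=> i j hij e; have := mon_lm i j hij; rewrite e; lra.
have mon_m' : forall i j : 'I_n, (i <= j)%N -> l i = l j -> m i = m j -> m' j <= m' i.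
  by move=> i j hij e e'; have := mon_lmm i j hij; rewrite e e'; lra.
have eF := isFree_Sof hF hi1.
have eG := isFree_Sof hG hi2.
have fr1 : m i1 * m' i1 < 0 by move: hi1; rewrite eF inE => /andP[].
have fr2 : m i2 * m' i2 < 0 by move: hi2; rewrite eG inE => /andP[].
have lne : l i1 != l i2.
  apply: contra hFG => /eqP e; rewrite eF eG; apply/eqP/setP => x; by rewrite !inE e.
have i12 : (i1 <= i2)%N by rewrite v1 v2 leq_sub2l.
have llt : l i2 < l i1 by rewrite lt_neqAle eq_sym lne hl3.
set S := Sof l m m' i1.
have i1S : i1 \in S by rewrite inE eqxx fr1.
have ea : a_num l m m' = #|[set j in S | m' j == - Defs.half]|.
  rewrite /a_num; case: pickP => [F' /andP[hF' /existsP[i /andP[hi /eqP vi]]] | h].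
    have ei : i = i1 by apply: val_inj; rewrite vi v1.
    by move: hi; rewrite ei => hi; rewrite (isFree_Sof hF' hi).
  have hx : [exists i in S, val i == (n-2)%N] by apply/existsP; exists i1; rewrite i1S v1 eqxx.
  by move: (h S); rewrite Sof_isFree // hx.
set a := a_num l m m'.
have ea' : a = #|[set j in S | m' j == - Defs.half]| := ea.
have inS : forall x, (x \in S) = (l x == l i1) && (m x * m' x < 0) by move=> x; rewrite inE.
clearbody S.
have nonfree_block : forall kk : 'I_n, (kk <= i1)%N -> l kk = l i1 ->
    ~~ (m kk * m' kk < 0) -> m kk = Defs.half /\ m' kk = Defs.half.
  move=> kk hkk ek hnf.
  have e1 := nfree_eq (hPm kk) (hPm' kk) hnf.
  have e2 := free_eq (hPm i1) (hPm' i1) fr1.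
  have A := mon_m kk i1 hkk ek.
  case: (hPm kk) => emk; first by rewrite -e1 emk.
  exfalso.
  have ei1 : m i1 = - Defs.half by case: (hPm i1) A => ->; rewrite emk; lra.
  have B := mon_m' kk i1 hkk ek (etrans emk (esym ei1)).
  case: (hPm' i1) e2 B => ->; rewrite ei1 -e1 emk; lra.
have [t tS0 tmin] := arg_minnP (fun k : 'I_n => val k) i1S.
have tS : t \in S := tS0.
have Schar : forall kk : 'I_n, (kk \in S) = (t <= kk < n - 1)%N.
  move=> kk; apply/idP/idP.
  - move=> hkS; rewrite tmin //=.
    have : kk \in S := hkS; rewrite inS => /andP[/eqP ek _].
    have nk : (val kk != n - 1)%N.
      rewrite -v2; apply/negP => /eqP vk.
      have : kk = i2 by apply: val_inj.
      by move=> ekk; move: lne; rewrite -ek ekk eqxx.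
    exact: ar1 nk (ltn_ord kk).
  - move=> /andP[h1 h2].
    have kki1 : (kk <= i1)%N by exact: ar2 hn v1 h2.
    have lt : l t = l i1 by move: tS; rewrite inS => /andP[/eqP].
    have ek : l kk = l i1.
      apply/le_anti/andP; split; [rewrite -lt; exact: hl3 | exact: hl3].
    rewrite inS ek eqxx /=. apply/negPn/negP => hnf.
    have [emk em'k] := nonfree_block kk kki1 ek hnf.
    have ftS : m t * m' t < 0 by move: tS; rewrite inS => /andP[].
    have A := mon_m t kk h1 (etrans lt (esym ek)).
    have emt : m t = Defs.half by case: (hPm t) A => ->; rewrite emk; lra.
    have B := mon_m' t kk h1 (etrans lt (esym ek)) (etrans emt (esym emk)).
    have em't : m' t = Defs.half by case: (hPm' t) B => ->; rewrite em'k; lra.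
    move: ftS; rewrite emt em't prod_neg; last by left. 2: by left.
    by apply/negP; apply/eqP; lra.
have cardS : #|S| = (n - 1 - t)%N.
  have -> : S = [set kk : 'I_n | (t <= kk < n - 1)%N] by apply/setP => kk; rewrite inE Schar.
  by rewrite c1 // leq_subr.
have ab : #|[set j in S | m' j == Defs.half]| = (#|S| - a)%N.
  have e1 : [set j in S | m' j == - Defs.half] = S :\: [set j | m' j == Defs.half].
    apply/setP => x; rewrite !inE andbC; congr (_ && _).
    by case: (hPm' x) => ->; rewrite ?eqxx ?hne1 ?hne2.
  have e2 : [set j in S | m' j == Defs.half] = S :&: [set j | m' j == Defs.half].
    by apply/setP => x; rewrite !inE.
  by rewrite ea' e1 e2 -(cardsID [set j | m' j == Defs.half] S) addnK.
have aS : (a <= #|S|)%N.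
  by rewrite ea'; apply: subset_leq_card; apply/subsetP => x; rewrite inE => /andP[].
have key_P : forall i : 'I_n, (i < n - a - 1)%N -> (0 < a)%N -> l i = l i1 ->
    mustar' l m m' i = Defs.half.
  move=> i hi ha ei; rewrite mustar'E.
  case: ifP => hf.
    have eS : Sof l m m' i = S by apply/setP => x; rewrite inS inE ei.
    rewrite eS.
    have iS : i \in S by rewrite inS ei eqxx hf.
    have hti : (t <= i < n - 1)%N by rewrite -Schar.
    have -> : [set x in S | (x < i)%N] = [set x : 'I_n | (t <= x < i)%N].
      by apply/setP => x; rewrite !inE Schar ar5 //; case/andP: hti.
    rewrite c1; last by case/andP: hti => _ /ltnW /leq_trans; apply; rewrite leq_subr.
    rewrite ab cardS ar3 //; by case/andP: hti.
  have ii1 : (i <= i1)%N.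
    exact: ar2 hn v1 (ar7 hi).
  by have [_ ->] := nonfree_block i ii1 ei (negbT hf).
have hPstar' : inPS (mustar' l m m').
  move=> j; rewrite mustar'E; case: ifP => _; last exact: hPm'.
  by case: ifP => _; [left | right].
have hPdiam' : inPS (mudiam' l m m').
  by move=> j; rewrite mudiam'E; case: ifP => _; [left | exact: hPstar'].
have hPstar : inPS (mustar l m m').
  move=> j; rewrite mustarE; case: ifP => _; last exact: hPm.
  by case: (hPstar' j) => ->; [right | left; rewrite opprK].
have hPdiam : inPS (mudiam l m m').
  by move=> j; rewrite mudiamE; case: ifP => _; [right | exact: hPstar].
have Bl : forall i j : 'I_n, (i <= j)%N -> l i = l j -> m' j - m' i <= 2%:R * (m i - m j).
  move=> i j hij e; apply: Bl_gen => //; [exact: mon_m | exact: mon_m'].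
have mono_star : forall i j : 'I_n, (i <= j)%N -> l i = l j ->
    mustar' l m m' j <= mustar' l m m' i.
  move=> i j hij e.
  have eS : Sof l m m' i = Sof l m m' j by apply/setP => x; rewrite !inE e.
  have A := mon_m i j hij e; have B := Bl i j hij e.
  rewrite !mustar'E eS.
  case: (boolP (m j * m' j < 0)) => fj; case: (boolP (m i * m' i < 0)) => fi /=.
  - have hr : (#|[set x in Sof l m m' j | (x < i)%N]| <= #|[set x in Sof l m m' j | (x < j)%N]|)%N.
      apply: subset_leq_card; apply/subsetP => x; rewrite !inE => /andP[-> h] /=.
      exact: leq_trans h hij.
    case: ifPn => hj; case: ifPn => hi; try lra.
    by move: hi; rewrite (leq_ltn_trans hr hj).
  - have hsj : forall y : rat, y = Defs.half \/ y = - Defs.half -> y <= m' i.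
      move=> y hy; exact: (ms_case3 (hPm i) (hPm' i) (hPm j) (hPm' j) hy (nfree_eq (hPm i) (hPm' i) fi)
      (free_eq (hPm j) (hPm' j) fj) A B).
    by case: ifP => _; apply: hsj; [left | right].
  - have hsi : forall y : rat, y = Defs.half \/ y = - Defs.half -> m' j <= y.
      move=> y hy; exact: (ms_case2 (hPm i) (hPm' i) (hPm j) (hPm' j) hy (free_eq (hPm i) (hPm' i) fi)
      (nfree_eq (hPm j) (hPm' j) fj) A B).
    by case: ifP => _; apply: hsi; [left | right].
  - by rewrite -(nfree_eq (hPm i) (hPm' i) fi) -(nfree_eq (hPm j) (hPm' j) fj).
have mono_diam : forall i j : 'I_n, (i <= j)%N -> l i = l j ->
    mudiam' l m m' j <= mudiam' l m m' i.
  move=> i j hij e; rewrite !mudiam'E -/a.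
  case: ifPn => mj; case: ifPn => mi.
  - by rewrite lexx.
  - move: mi; rewrite negb_or => /andP[mi1 mi2].
    have ii1 : (i <= i1)%N := ar2 hn v1 (ar1 mi1 (ltn_ord i)).
    have Hn1 : val j != (n - 1)%N.
      apply/negP => /eqP vj.
      have ej : j = i2 by apply: val_inj; rewrite vj v2.
      have := hl3 i i1 ii1; rewrite e ej => h; have := llt; lra.
    have vj : val j = (n - a - 1)%N by move: mj; rewrite (negbTE Hn1) => /eqP.
    have ha : (0 < a)%N := ar8 vj Hn1.
    have jS : j \in S by rewrite Schar; apply: ar4 vj ha _; rewrite -cardS.
    have lj : l j = l i1 by move: jS; rewrite inS => /andP[/eqP].
    have hij' : (i < j)%N by apply: (@ar6 i j hij); rewrite vj.
    rewrite key_P //; [by rewrite -vj | by rewrite e].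
  - by case: (hPstar' j) => ->; lra.
  - exact: mono_star.
have addE : forall (x y : weight n) i, (x + y) i = x i + y i by move=> x y i; rewrite ffunE.
have cwx : forall (x : weight n) (i : 'I_n), cw x i = x i by move=> x i; rewrite /cw valK.
have domD : dominant (l + mudiam' l m m').
  apply: dom_shift => //.
  have e2 : mudiam' l m m' i2 = Defs.half by rewrite mudiam'E v2 eqxx.
  have e1 : - Defs.half <= mudiam' l m m' i1 by case: (hPdiam' i1) => ->; rewrite ?lexx // lerN2 ltW // hpos.
  move: hl4; rewrite -v1 -v2 !cwx !addE e2 => h4; lra.
have sumE : l + mudiam' l m m' + mudiam l m m' = l + m + m'.
  apply/ffunP => j; rewrite !addE mudiam'E mudiamE -/a.
  case: ifPn => c.
  - have fj : m j * m' j < 0.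
      case/orP: c => /eqP vj.
        by have -> : j = i2 by apply: val_inj; rewrite vj v2.
      have [a0|ha] := posnP a.
        by move: vj; rewrite a0 subn0 => vj; have -> : j = i2 by apply: val_inj; rewrite vj v2.
      have jS : j \in S by rewrite Schar; apply: ar4 vj ha _; rewrite -cardS.
      by move: jS; rewrite inS => /andP[].
    have := free_eq (hPm j) (hPm' j) fj; lra.
  - rewrite mustarE; case: ifP => fj; last by rewrite mustar'E fj; lra.
    have := free_eq (hPm j) (hPm' j) fj; lra.
split => //; split => //; first by exists k.
by rewrite sumE.
Qed.
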